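(* Let $k$ be an infinite field, $<$ a term order on $k[X_1,\ldots,X_n]$ with $X_1<\cdots<X_n$, and $A\subseteq k^n$ a finite union of pairwise distinct affine $d$-planes. For each $J\subseteq\{1,\ldots,n\}$ with $\#J=d$, let $A_J$ be the union of those irreducible components of $A$ whose minimal free variables are $\{X_j;\ j\in J\}$, and let $m_J$ be their number. Assume that for every such $J$, every $d$-plane contained in $D(A_J)$ is parallel to $\bigoplus_{j\in J}\mathbb{N}e_j$ and the number of these $d$-planes is $m_J$. Then the union $E(A)$ of all $d$-planes contained in $D(A)$ equals $\bigcup_J E(A_J)$, where $E(A_J)$ is the union of all $d$-planes contained in $D(A_J)$; consequently, for every $J$ with $\#J=d$, the number of $d$-planes in $D(A)$ parallel to $\bigoplus_{j\in J}\mathbb{N}e_j$ equals $m_J$.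
   Context: $I(A)$ is the ideal of polynomials vanishing on $A\subseteq k^n$ (with $I(\emptyset)=k[X]$); ${\rm LE}(f)$ is the exponent of the leading monomial of $f\neq0$ w.r.t. $<$; $C(A)=\{{\rm LE}(f);\ 0\neq f\in I(A)\}$, $D(A)=\mathbb{N}^n\setminus C(A)$. A $d$-plane in $\delta\subseteq\mathbb{N}^n$ is a subset of $\delta$ of the form $\gamma+\bigoplus_{j\in J}\mathbb{N}e_j$ with $\#J=d$ and $\gamma_j=0$ for $j\in J$, said to be parallel to $\bigoplus_{j\in J}\mathbb{N}e_j$. An affine $d$-plane is a translate of a $d$-dimensional linear subspace of $k^n$. $\{X_j;\ j\in J\}$ ($\#J=d$) is a set of free variables of an affine $d$-plane $A'$ if the coordinate projection $A'\to k^J$ is bijective; these are the minimal free variables of $A'$ if moreover for no $j\in J$ and $i\notin J$ with $i<j$ is $\{X_j;\ j\in(J\setminus\{j\})\cup\{i\}\}$ a set of free variables of $A'$. *)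

(* Defs.v *)
From HB Require Import structures.
From mathcomp Require Import all_boot all_order all_algebra.
From Stdlib Require Import ClassicalEpsilon.
Set Implicit Arguments. Unset Strict Implicit. Unset Printing Implicit Defensive.
Import GRing.Theory.
Local Open Scope ring_scope.

(* Exponent vectors in N^n (indices 'I_n, X_{i+1} <-> i). *)
Definition mon (n : nat) := {ffun 'I_n -> nat}.
Definition madd n (a b : mon n) : mon n := [ffun i => (a i + b i)%N].
Definition mzero n : mon n := [ffun _ => 0%N].
Definition munit n (i : 'I_n) : mon n := [ffun l => nat_of_bool (l == i)].

Definition term_order n (le : rel (mon n)) : Prop :=
  [/\ reflexive le, antisymmetric le, transitive le, total le
    & (forall a, le (mzero n) a)] /\
  (forall a b c, le a b -> le (madd a c) (madd b c)).
Definition vars_increasing n (le : rel (mon n)) : Prop :=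
  forall i j : 'I_n, (i < j)%N -> le (munit i) (munit j) /\ munit i != munit j.

Definition mon_eval (k : fieldType) n (x : 'rV[k]_n) (a : mon n) : k :=
  \prod_(i < n) x 0 i ^+ a i.

(* A polynomial is given by a coefficient function c with finite support
   contained in the duplicate-free list s; its value at x. *)
Definition poly_eval (k : fieldType) n (c : mon n -> k) (s : seq (mon n))
  (x : 'rV[k]_n) : k := \sum_(a <- s) c a * mon_eval x a.

(* C(A): leading exponents of nonzero polynomials vanishing on A. *)
Definition Cset (k : fieldType) n (le : rel (mon n)) (A : 'rV[k]_n -> Prop)
  (e : mon n) : Prop :=
  exists (c : mon n -> k) (s : seq (mon n)),
    [/\ uniq s, (forall a, c a != 0 -> a \in s),
        c e != 0, (forall a, c a != 0 -> le a e)
      & (forall x, A x -> poly_eval c s x = 0)].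

Definition Dset (k : fieldType) n (le : rel (mon n)) (A : 'rV[k]_n -> Prop)
  (e : mon n) : Prop := ~ Cset le A e.

Definition nplane n (g : mon n) (J : {set 'I_n}) (e : mon n) : Prop :=
  exists t : mon n, (forall i, i \notin J -> t i = 0%N) /\ e = madd g t.

Definition dplane_in n (d : nat) (delta : mon n -> Prop) (g : mon n)
  (J : {set 'I_n}) : Prop :=
  [/\ #|J| = d, (forall j, j \in J -> g j = 0%N)
    & (forall e, nplane g J e -> delta e)].

Definition Eset n (d : nat) (delta : mon n -> Prop) (e : mon n) : Prop :=
  exists g J, dplane_in d delta g J /\ nplane g J e.

Definition card_eq (T : eqType) (P : T -> Prop) (m : nat) : Prop :=
  exists s : seq T, [/\ uniq s, (forall x, x \in s <-> P x) & size s = m].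

Definition decP (P : Prop) : bool :=
  if excluded_middle_informative P then true else false.
Definition pcard (T : finType) (P : T -> Prop) : nat := #|[pred x | decP (P x)]|.

(* Affine d-plane p + rowspace(B), B : 'M_(d,n) row-free (dimension d). *)
Definition in_aplane (k : fieldType) n d (p : 'rV[k]_n) (B : 'M[k]_(d, n))
  (x : 'rV[k]_n) : Prop := (x - p <= B)%MS.

Definition free_vars (k : fieldType) n d (p : 'rV[k]_n) (B : 'M[k]_(d, n))
  (J : {set 'I_n}) : Prop :=
  #|J| = d /\
  forall y : 'rV[k]_n, exists! x, in_aplane p B x /\ (forall j, j \in J -> x 0 j = y 0 j).

Definition min_free_vars (k : fieldType) n d (p : 'rV[k]_n) (B : 'M[k]_(d, n))
  (J : {set 'I_n}) : Prop :=
  free_vars p B J /\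
  ~ (exists (j i : 'I_n), [/\ j \in J, i \notin J, (i < j)%N &
        free_vars p B (i |: (J :\ j))]).

(* Main.v *)
Require Import Defs.
From HB Require Import structures.
From mathcomp Require Import all_boot all_order all_algebra.
From Stdlib Require Import Classical.
Set Implicit Arguments. Unset Strict Implicit. Unset Printing Implicit Defensive.
Import GRing.Theory.
Local Open Scope ring_scope.

Section Poly.
Variables (k : fieldType) (n : nat) (le : rel (mon n)).
Hypothesis Hto : term_order le.

Lemma maddC (a b : mon n) : madd a b = madd b a.
Proof. by apply/ffunP => i; rewrite !ffunE addnC. Qed.
Lemma maddA (a b c : mon n) : madd a (madd b c) = madd (madd a b) c.
Proof. by apply/ffunP => i; rewrite !ffunE addnA. Qed.
Lemma madd0 (a : mon n) : madd a (mzero n) = a.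
Proof. by apply/ffunP => i; rewrite !ffunE addn0. Qed.
Lemma maddI (a b c : mon n) : madd a c = madd b c -> a = b.
Proof. move/ffunP => H; apply/ffunP => i; move: (H i); rewrite !ffunE; apply: addIn. Qed.

Lemma le_trans' : transitive le. Proof. by case: Hto => [[]]. Qed.
Lemma le_antisym' : antisymmetric le. Proof. by case: Hto => [[]]. Qed.
Lemma le_compat a b c : le a b -> le (madd a c) (madd b c). Proof. by case: Hto => _; apply. Qed.

Lemma le_madd a b e1 e2 : le a e1 -> le b e2 -> le (madd a b) (madd e1 e2).
Proof.
move=> H1 H2; apply: (@le_trans' (madd e1 b)); first exact: le_compat.
by rewrite (maddC e1) (maddC e1); exact: le_compat.
Qed.

Lemma madd_lead a b e1 e2 : le a e1 -> le b e2 -> madd a b = madd e1 e2 -> a = e1 /\ b = e2.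
Proof.
move=> H1 H2 E.
have L1 : le (madd a b) (madd e1 b) by exact: le_compat.
have L2 : le (madd e1 b) (madd e1 e2) by rewrite (maddC e1) (maddC e1); exact: le_compat.
have E1 : madd a b = madd e1 b.
  apply: le_antisym'; rewrite L1 /=; by rewrite E -E in L2 *.
have Ha := maddI E1; split => //; subst a.
by apply: (@maddI _ _ e1); rewrite maddC E maddC.
Qed.

Lemma mon_eval_madd (x : 'rV[k]_n) a b : mon_eval x (madd a b) = mon_eval x a * mon_eval x b.
Proof. by rewrite /mon_eval -big_split /=; apply: eq_bigr => i _; rewrite ffunE exprD. Qed.

Lemma sum_ind (T : eqType) (r : seq T) (x : T) (G : T -> k) :
  uniq r -> x \in r -> \sum_(e <- r) (x == e)%:R * G e = G x.
Proof.
move=> u xr; rewrite (bigD1_seq x) //= eqxx mul1r big1 ?addr0 // => e ne.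
by rewrite eq_sym (negbTE ne) mul0r.
Qed.

Lemma Cset_intro (S : 'rV[k]_n -> Prop) (c : mon n -> k) s e :
  (forall a, c a != 0 -> a \in s) -> c e != 0 -> (forall a, c a != 0 -> le a e) ->
  (forall x, S x -> \sum_(a <- undup s) c a * mon_eval x a = 0) -> Cset le S e.
Proof.
move=> H1 H2 H3 H4; exists c, (undup s); split => //; first exact: undup_uniq.
by move=> a /H1; rewrite mem_undup.
Qed.

Lemma Cset_mono (S S' : 'rV[k]_n -> Prop) e : Cset le S e -> (forall x, S' x -> S x) -> Cset le S' e.
Proof.
move=> [c [s [u H1 H2 H3 H4]]] HS; exists c, s; split => // x /HS; exact: H4.
Qed.

Lemma Cset_mul (S1 S2 : 'rV[k]_n -> Prop) e1 e2 :
  Cset le S1 e1 -> Cset le S2 e2 -> Cset le (fun x => S1 x \/ S2 x) (madd e1 e2).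
Proof.
move=> [c1 [s1 [u1 A1 B1 C1 D1]]] [c2 [s2 [u2 A2 B2 C2 D2]]].
pose c e := \sum_(a <- s1) \sum_(b <- s2) (madd a b == e)%:R * (c1 a * c2 b).
have Hnz : forall e, c e != 0 -> exists a b, [/\ c1 a != 0, c2 b != 0 & madd a b = e].
  move=> e Hne; apply: NNPP => Hn; move/eqP: Hne; apply.
  rewrite /c big1_seq // => a /andP[_ ain].
  rewrite big1_seq // => b /andP[_ bin].
  case: (eqVneq (madd a b) e) => [E|_]; last by rewrite mul0r.
  case: (eqVneq (c1 a) 0) => [->|na]; first by rewrite mul0r mulr0.
  case: (eqVneq (c2 b) 0) => [->|nb]; first by rewrite mulr0 mulr0.
  by exfalso; apply: Hn; exists a, b.
apply: (@Cset_intro _ c [seq madd a b | a <- s1, b <- s2]).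
- move=> e /Hnz [a [b [na nb <-]]]; apply/allpairsP; exists (a, b); split => //.
  + exact: A1.
  + exact: A2.
- have -> : c (madd e1 e2) = c1 e1 * c2 e2.
    have pt : forall a b, (madd a b == madd e1 e2)%:R * (c1 a * c2 b) =
        (e1 == a)%:R * ((e2 == b)%:R * (c1 e1 * c2 e2)) :> k.
      move=> a b.
      case: (eqVneq (c1 a) 0) => [z|na].
        rewrite z mul0r mulr0; case: eqP => [E|]; last by rewrite mul0r.
        by rewrite E z mul0r !mulr0.
      case: (eqVneq (c2 b) 0) => [z|nb].
        rewrite z !mulr0; case: (eqP (x := e2)) => [E|]; last by rewrite mul0r mulr0.
        by rewrite E z !mulr0.
      case: (eqVneq (madd a b) (madd e1 e2)) => [E|NE].
        by have [-> ->] := madd_lead (C1 _ na) (C2 _ nb) E; rewrite !eqxx !mul1r.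
      rewrite mul0r; case: eqP => [Ea|]; last by rewrite mul0r.
      case: eqP => [Eb|]; last by rewrite mul0r mulr0.
      by rewrite Ea Eb eqxx in NE.
    rewrite /c (eq_bigr (fun a => (e1 == a)%:R * \sum_(b <- s2) (e2 == b)%:R * (c1 e1 * c2 e2))).
      rewrite sum_ind ?A1 // sum_ind ?A2 //.
    by move=> a _; rewrite mulr_sumr; apply: eq_bigr => b _; rewrite pt.
  by rewrite mulf_neq0.
- move=> a /Hnz [a1 [b1 [na nb <-]]]; exact: le_madd (C1 _ na) (C2 _ nb).
- move=> x Hx.
  have -> : \sum_(a <- undup [seq madd a b | a <- s1, b <- s2]) c a * mon_eval x a =
      (\sum_(a <- s1) c1 a * mon_eval x a) * (\sum_(b <- s2) c2 b * mon_eval x b).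
    rewrite /c big_distrl /=.
    under eq_bigr do rewrite mulr_suml.
    rewrite exchange_big /=; apply: eq_big_seq => a ain.
    under eq_bigr do rewrite mulr_suml.
    rewrite big_distrr /= exchange_big /=; apply: eq_big_seq => b bin.
    under eq_bigr do rewrite -mulrA.
    rewrite (@sum_ind _ _ _ (fun e => (c1 a * c2 b * mon_eval x e))) ?undup_uniq //.
      by rewrite mon_eval_madd mulrACA.
    by rewrite mem_undup; apply/allpairsP; exists (a, b).
  case: Hx => Hx.
  + by move: (D1 _ Hx); rewrite /poly_eval => ->; rewrite mul0r.
  + by move: (D2 _ Hx); rewrite /poly_eval => ->; rewrite mulr0.
Qed.
End Poly.

Section Lin.
Variables (k : fieldType) (n : nat) (le : rel (mon n)).
Hypothesis Hto : term_order le.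
Hypothesis Hvi : vars_increasing le.

Lemma munitE (l j : 'I_n) : munit l j = (j == l) :> nat.
Proof. by rewrite ffunE. Qed.

Lemma munit_inj : injective (@munit n).
Proof. by move=> l l' /ffunP /(_ l); rewrite !ffunE eqxx; case: eqP. Qed.

Lemma munit_neq0 l : (munit l == mzero n) = false.
Proof. by apply/eqP => /ffunP /(_ l); rewrite !ffunE eqxx. Qed.

Lemma mon_eval0 (x : 'rV[k]_n) : mon_eval x (mzero n) = 1.
Proof. by rewrite /mon_eval big1 // => i _; rewrite ffunE expr0. Qed.

Lemma mon_eval_unit (x : 'rV[k]_n) l : mon_eval x (munit l) = x 0 l.
Proof.
rewrite /mon_eval (bigD1 l) //= munitE eqxx expr1 big1 ?mulr1 // => j nj.
by rewrite munitE (negbTE nj) expr0.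
Qed.

Lemma sum_ord_ind (F : 'I_n -> k) l : \sum_j (l == j)%:R * F j = F l.
Proof.
rewrite (bigD1 l) //= eqxx mul1r big1 ?addr0 // => j nj.
by rewrite eq_sym (negbTE nj) mul0r.
Qed.

Lemma lin_Cset d (p : 'rV[k]_n) (B : 'M[k]_(d, n)) (a : 'rV[k]_n) (i : 'I_n) :
  a *m B^T = 0 -> a 0 i != 0 -> (forall l : 'I_n, (i < l)%N -> a 0 l = 0) ->
  Cset le (in_aplane p B) (munit i).
Proof.
move=> aB ai amax.
pose kap := - \sum_l a 0 l * p 0 l.
pose c e := \sum_l (e == munit l)%:R * a 0 l + (e == mzero n)%:R * kap.
pose s := mzero n :: [seq munit l | l <- enum 'I_n].
have cu : forall l, c (munit l) = a 0 l.
  move=> l; rewrite /c munit_neq0 mul0r addr0.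
  under eq_bigr do rewrite (inj_eq munit_inj).
  exact: sum_ord_ind.
have c0 : c (mzero n) = kap.
  rewrite /c eqxx mul1r big1 ?add0r // => l _.
  by rewrite eq_sym munit_neq0 mul0r.
have us : uniq s.
  rewrite /= map_inj_uniq ?enum_uniq ?andbT; last exact: munit_inj.
  by apply/mapP => [[l _ /eqP]]; rewrite eq_sym munit_neq0.
have supp : forall e, c e != 0 -> e \in s.
  move=> e; apply: contraR => ens.
  have e0 : (e == mzero n) = false by apply: negbTE; apply: contra ens => /eqP ->; rewrite mem_head.
  rewrite /c e0 mul0r addr0 big1 // => l _.
  case: eqP => [E|]; last by rewrite mul0r.
  by move: ens; rewrite E inE; move/norP => [_ /mapP []]; exists l; rewrite ?mem_enum.
apply: (@Cset_intro _ _ _ _ c s) => //.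
- by rewrite cu.
- move=> e /[dup] ce /supp; rewrite inE => /orP [/eqP ->|/mapP [l _ El]].
    by case: Hto => [[]].
  subst e; move: ce; rewrite cu => al.
  case: (ltngtP i l) => [il|li|/val_inj ->].
  + by rewrite (amax _ il) eqxx in al.
  + by case: (Hvi li).
  + by case: Hto => [[]].
- move=> x; rewrite /in_aplane => /submxP [u xu].
  rewrite undup_id // big_cons c0 mon_eval0 mulr1 big_map big_enum /=.
  under eq_bigr do rewrite cu mon_eval_unit.
  rewrite /kap addrC.
  have -> : \sum_(i0 in 'I_n) a 0 i0 * x 0 i0 = \sum_l a 0 l * x 0 l by apply: eq_bigl.
  rewrite -sumrB.
  have : ((x - p) *m a^T) 0 0 = 0.
    by rewrite xu -mulmxA -[B](trmxK) -trmx_mul aB trmx0 mulmx0 mxE.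
  rewrite mxE => H; rewrite -[RHS]H; apply: eq_bigr => l _.
  by rewrite !mxE mulrBl mulrC [p 0 l * _]mulrC.
Qed.
End Lin.

Section LA.
Variables (k : fieldType) (n : nat).

Definition dot (v w : 'rV[k]_n) := \sum_l v 0 l * w 0 l.

Lemma dotE (v w : 'rV[k]_n) : (v *m w^T) 0 0 = dot v w.
Proof. by rewrite mxE; apply: eq_bigr => l _; rewrite mxE. Qed.

Lemma dotD (v w u : 'rV[k]_n) : dot v (w + u) = dot v w + dot v u.
Proof. by rewrite /dot -big_split; apply: eq_bigr => l _; rewrite mxE mulrDr. Qed.

Lemma dot_delta (v : 'rV[k]_n) l : dot v (delta_mx 0 l) = v 0 l.
Proof.
rewrite /dot (bigD1 l) //= mxE !eqxx mulr1 big1 ?addr0 // => j nj.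
by rewrite mxE eqxx (negbTE nj) mulr0.
Qed.

Lemma dot_orth d (B : 'M[k]_(d, n)) v w : (v <= B)%MS -> w *m B^T = 0 -> dot v w = 0.
Proof.
move=> /submxP [z ->] wB; rewrite -dotE -mulmxA -[B](trmxK) -trmx_mul wB trmx0 mulmx0.
by rewrite mxE.
Qed.

Lemma exists_last (a : 'rV[k]_n) : a != 0 ->
  exists i, a 0 i != 0 /\ forall l : 'I_n, (i < l)%N -> a 0 l = 0.
Proof.
move=> an0.
have [i0 ai0] : exists i0, a 0 i0 != 0.
  apply: NNPP => H; move/eqP: an0; apply; apply/matrixP => r l.
  rewrite ord1 mxE; apply: NNPP => H'; apply: H; exists l; exact/eqP.
case: (@arg_maxnP _ i0 (fun i => a 0 i != 0) (fun i => nat_of_ord i) ai0) => i ai Hm.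
exists i; split => // l il; apply: NNPP => /eqP H.
by have := Hm _ H; rewrite /geq /= leqNgt il.
Qed.

Variables (le : rel (mon n)) (Hto : term_order le) (Hvi : vars_increasing le).

Lemma not_min_free d (p : 'rV[k]_n) (B : 'M[k]_(d, n)) (J : {set 'I_n}) :
  row_free B -> #|J| = d -> ~ min_free_vars p B J ->
  exists i, i \in J /\ Cset le (in_aplane p B) (munit i).
Proof.
move=> rfB cJ Hnm; apply: NNPP => Hno; apply: Hnm.
have H : forall i, i \in J -> ~ Cset le (in_aplane p B) (munit i).
  by move=> i iJ Hc; apply: Hno; exists i.
have H1 : forall a : 'rV[k]_n, a *m B^T = 0 -> a != 0 ->
    exists i, [/\ i \notin J, a 0 i != 0 & forall l : 'I_n, (i < l)%N -> a 0 l = 0].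
  move=> a aB an0; have [i [ai am]] := exists_last an0.
  exists i; split => //; apply/negP => iJ; apply: (H i iJ).
  exact: (lin_Cset Hto Hvi p aB ai am).
pose C : 'M[k]_(n, #|J|) := \matrix_(l, r) (l == enum_val r)%:R.
have C1 : forall (v : 'rV[k]_n) r, (v *m C) 0 r = v 0 (enum_val r).
  move=> v r; rewrite mxE (bigD1 (enum_val r)) //= mxE eqxx mulr1 big1 ?addr0 // => j nj.
  by rewrite mxE (negbTE nj) mulr0.
have C3 : forall v : 'rV[k]_n, (v <= C^T)%MS -> forall l, l \notin J -> v 0 l = 0.
  move=> v /submxP [z ->] l lJ; rewrite mxE big1 // => r _.
  rewrite !mxE; case: eqP => [E|]; last by rewrite mulr0.
  by move: lJ; rewrite E enum_valP.
have rC : \rank C^T = #|J|.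
  apply/eqP; apply/row_freeP; exists C; apply/matrixP => r r'.
  rewrite !mxE (bigD1 (enum_val r)) //= !mxE eqxx mul1r big1 ?addr0.
    by rewrite (inj_eq enum_val_inj).
  by move=> j nj; rewrite !mxE (negbTE nj) mul0r.
have rB : \rank B = d by apply/eqP.
have dn : (d <= n)%N by rewrite -rB rank_leq_col.
pose W := kermx B^T.
have capW : (W :&: C^T)%MS = 0.
  apply/eqP/rowV0P => v; rewrite sub_capmx => /andP [vW vC].
  apply: NNPP => /eqP vn0.
  have vB : v *m B^T = 0 by apply/sub_kermxP.
  have [i [iJ vi _]] := H1 _ vB vn0.
  by move: vi; rewrite (C3 _ vC _ iJ) eqxx.
have full : row_full (W + C^T)%MS.
  rewrite /row_full mxrank_disjoint_sum // mxrank_ker mxrank_tr rB rC cJ subnK //.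
have Dec : forall v : 'rV[k]_n, exists w u, [/\ v = w + u, w *m B^T = 0 &
      forall l, l \notin J -> u 0 l = 0].
  move=> v; have /sub_addsmxP [[u1 u2] /= E] := submx_full v full.
  exists (u1 *m W), (u2 *m C^T); split => //.
    by apply/sub_kermxP; rewrite submxMl.
  by apply: C3; rewrite submxMl.
have U : forall v : 'rV[k]_n, (v <= B)%MS -> (forall j, j \in J -> v 0 j = 0) -> v = 0.
  move=> v vB vJ; apply/matrixP => r l; rewrite ord1 mxE.
  have [w [u [E wB uJ]]] := Dec (delta_mx 0 l).
  rewrite -dot_delta E dotD (dot_orth vB wB) add0r /dot big1 // => j _.
  by case: (boolP (j \in J)) => jJ; [rewrite vJ ?mul0r | rewrite uJ ?mulr0].
have Ex : forall y : 'rV[k]_n, exists x, in_aplane p B x /\ forall j, j \in J -> x 0 j = y 0 j.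
  move=> y.
  have rBC : \rank (B *m C) = \rank B.
    apply/mxrank_injP/rowV0P => v; rewrite sub_capmx => /andP [vB vC].
    apply: U => // j jJ; move/sub_kermxP: vC => /matrixP /(_ 0 (enum_rank_in jJ j)).
    by rewrite C1 enum_rankK_in // mxE.
  have fBC : row_full (B *m C) by rewrite /row_full rBC rB cJ.
  have /submxP [z Ez] := submx_full ((y - p) *m C) fBC.
  exists (p + z *m B); split.
    by rewrite /in_aplane addrC addKr submxMl.
  move=> j jJ.
  have : ((p + z *m B) *m C) 0 (enum_rank_in jJ j) = (y *m C) 0 (enum_rank_in jJ j).
    by rewrite mulmxDl -mulmxA -Ez mulmxBl addrC subrK.
  by rewrite !C1 enum_rankK_in.
have FV : free_vars p B J.
  split => // y; have [x [xA xJ]] := Ex y.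
  exists x; split => // x' [x'A x'J].
  apply/eqP; rewrite -subr_eq0; apply/eqP; apply: U.
    move: xA x'A; rewrite /in_aplane => /submxP [z1 E1] /submxP [z2 E2].
    have -> : x - x' = (z1 - z2) *m B by rewrite mulmxBl -E1 -E2 opprB addrA subrK.
    exact: submxMl.
  by move=> j jJ; rewrite !mxE xJ // x'J // subrr.
split => //; move=> [j [i [jJ iJ ij FV2]]].
have [w [u [E wB uJ]]] := Dec (delta_mx 0 i).
have wi : w 0 i = 1.
  by move/matrixP: E => /(_ 0 i); rewrite !mxE !eqxx (uJ _ iJ) addr0 => <-.
have wl : forall l, l \notin J -> l != i -> w 0 l = 0.
  move=> l lJ li; move/matrixP: E => /(_ 0 l); rewrite !mxE (uJ _ lJ) addr0 eqxx.
  by rewrite (negbTE li) => <-.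
have wj : w 0 j = 0.
  have wn0 : w != 0 by apply/eqP => w0; move: wi; rewrite w0 mxE => /eqP; rewrite eq_sym oner_eq0.
  have [i0 [i0J wi0 wm]] := H1 _ wB wn0.
  have i0i : i0 = i.
    apply: NNPP => /eqP ne; move: wi0; rewrite wl ?eqxx //.
  by apply: wm; rewrite i0i.
case: FV2 => _ /(_ (p + delta_mx 0 i)) [x [[xA xJ] _]].
have xB : (x - p <= B)%MS by [].
have := dot_orth xB wB; rewrite /dot (bigD1 i) //= big1.
  rewrite addr0 wi mulr1 !mxE xJ; last by rewrite !inE eqxx.
  by rewrite !mxE !eqxx addrC addKr => /eqP; rewrite oner_eq0.
move=> l li; rewrite !mxE.
case: (eqVneq l j) => [->|lj]; first by rewrite wj mulr0.
case: (boolP (l \in J)) => lJ.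
  rewrite xJ; last by rewrite !inE (negbTE li) lj lJ.
  by rewrite !mxE (negbTE li) andbF mulr0n addrC addKr mul0r.
by rewrite wl ?mulr0.
Qed.
End LA.

Lemma dplane_mono n d (D1 D2 : mon n -> Prop) g J :
  (forall e, D1 e -> D2 e) -> dplane_in d D1 g J -> dplane_in d D2 g J.
Proof. by move=> H [c z P]; split => // e /P; apply: H. Qed.

Lemma Dset_mono (k : fieldType) n (le : rel (mon n)) (S1 S2 : 'rV[k]_n -> Prop) e :
  (forall x, S1 x -> S2 x) -> Dset le S1 e -> Dset le S2 e.
Proof. by move=> H D1 C2; apply: D1; apply: Cset_mono C2 _. Qed.

Theorem mainTheorem3 (k : fieldType) (n d m : nat) (le : rel (mon n))
  (p : 'I_m -> 'rV[k]_n) (B : 'I_m -> 'M[k]_(d, n)) :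
  (* k infinite *)
  (forall s : seq k, exists x : k, x \notin s) ->
  term_order le -> vars_increasing le ->
  (* each component is an affine d-plane *)
  (forall i, row_free (B i)) ->
  (* pairwise distinct *)
  (forall i j, i != j -> ~ (forall x, in_aplane (p i) (B i) x <-> in_aplane (p j) (B j) x)) ->
  let A := fun x => exists i, in_aplane (p i) (B i) x in
  let AJ := fun (J : {set 'I_n}) x =>
              exists i, min_free_vars (p i) (B i) J /\ in_aplane (p i) (B i) x in
  let mJ := fun (J : {set 'I_n}) => pcard (fun i => min_free_vars (p i) (B i) J) in
  (forall J : {set 'I_n}, #|J| = d ->
     (forall g J', dplane_in d (Dset le (AJ J)) g J' -> J' = J) /\
     card_eq (fun g => dplane_in d (Dset le (AJ J)) g J) (mJ J)) ->
  (forall e, Eset d (Dset le A) e <->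
             exists J : {set 'I_n}, #|J| = d /\ Eset d (Dset le (AJ J)) e) /\
  (forall J : {set 'I_n}, #|J| = d ->
     card_eq (fun g => dplane_in d (Dset le A) g J) (mJ J)).
Proof.
move=> _ Hto Hvi rf _ A AJ mJ Hyp.
have AJA : forall J x, AJ J x -> A x by move=> J x [i [_ xi]]; exists i.
have key : forall J g, dplane_in d (Dset le A) g J -> dplane_in d (Dset le (AJ J)) g J.
  move=> J g [cJ gJ Pl]; split => // e ne HC.
  have claim : forall r : seq 'I_m, exists v : mon n, (forall i, i \notin J -> v i = 0%N) /\
      Cset le (fun x => AJ J x \/ exists c, c \in r /\ in_aplane (p c) (B c) x) (madd e v).
    elim => [|c r [v [vJ Hv]]].
      exists (mzero n); split; first by move=> i _; rewrite ffunE.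
      rewrite madd0; apply: Cset_mono HC _ => x [H|[c [cin _]]] //; by rewrite in_nil in cin.
    case: (classic (min_free_vars (p c) (B c) J)) => Hm.
      exists v; split => //; apply: Cset_mono Hv _ => x [H|[c' [c'in xc']]]; first by left.
      move: c'in; rewrite inE => /orP [/eqP Ec|c'r]; first by left; exists c; split; [exact: Hm | rewrite -Ec].
      by right; exists c'.
    have [i [iJ Ci]] := not_min_free Hto Hvi (rf c) cJ Hm.
    exists (madd v (munit i)); split.
      move=> l lJ; rewrite ffunE vJ // ffunE; case: eqP => // E; by rewrite E iJ in lJ.
    rewrite maddA; apply: Cset_mono (Cset_mul Hto Hv Ci) _ => x [H|[c' [c'in xc']]].
      by left; left.
    move: c'in; rewrite inE => /orP [/eqP Ec|c'r]; first by right; rewrite -Ec.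
    by left; right; exists c'.
  have [v [vJ Hv]] := claim (enum 'I_m).
  have CA : Cset le A (madd e v).
    by apply: Cset_mono Hv _ => x [i xi]; right; exists i; rewrite mem_enum.
  move: ne => [t [tJ Et]].
  apply: (Pl (madd e v)) CA; exists (madd t v); split; last by rewrite Et maddA.
  by move=> i iJ; rewrite ffunE tJ // vJ.
split.
  move=> e; split.
    move=> [g [J [Hd ne]]]; exists J; split; first by case: Hd.
    by exists g, J; split => //; apply: key.
  move=> [J [_ [g [J' [Hd ne]]]]]; exists g, J'; split => //.
  by apply: dplane_mono Hd => e'; apply: Dset_mono; apply: AJA.
move=> J cJ; have [_ [s [us Hs sz]]] := Hyp J cJ.
exists s; split => // g; rewrite Hs; split; first by apply: dplane_mono => e'; apply: Dset_mono; apply: AJA.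
exact: key.
Qed.
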